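(* Let $H$ be a complex Hilbert space, $A\in B(H)$ a nonzero positive semidefinite operator, and $T\in B_{A^{1/2}}(H)$ with $TA^{1/2}=A^{1/2}T$. Then $r_A(T)=r_A(T^{\diamond})$.
   Context: $\|x\|_A=\langle Ax,x\rangle^{1/2}$. For $S\in B(H)$, $\|S\|_A=\sup\{\|Sx\|_A : x\in\overline{R(A)},\ \|x\|_A=1\}$. $B_{A^{1/2}}(H)=\{S\in B(H): R(S^*A^{1/2})\subset R(A^{1/2})\}$. For $S\in B_{A^{1/2}}(H)$, $S^{\diamond}$ is the unique operator in $B(H)$ with $S^*A^{1/2}=A^{1/2}S^{\diamond}$ and $R(S^{\diamond})\subset\overline{R(A^{1/2})}$; $S^\diamond\in B_{A^{1/2}}(H)$. $r_A(S)=\lim_{n\to\infty}\|S^n\|_A^{1/n}$. *)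

(* Defs.v *)
From HB Require Import structures.
From mathcomp Require Import all_boot all_order all_algebra.
From mathcomp Require Import all_classical all_reals all_analysis.
From mathcomp Require Import complex.
Set Implicit Arguments. Unset Strict Implicit. Unset Printing Implicit Defensive.
Import Order.TTheory GRing.Theory Num.Theory.
Local Open Scope ring_scope.
Local Open Scope classical_set_scope.

Section Hilbert.
Variables (R : realType) (H : lmodType R[i]) (ip : H -> H -> R[i]).

Definition inner_product_axioms : Prop :=
  [/\ forall (a : R[i]) x y z, ip (a *: x + y) z = a * ip x z + ip y z,
      forall x y, ip y x = (ip x y)^*,
      forall x, 0 <= ip x x
    & forall x, ip x x = 0 -> x = 0].

Definition hnorm (x : H) : R := Num.sqrt (complex.Re (ip x x)).

Definition complete_ip : Prop :=
  forall u : nat -> H,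
    (forall e : R, 0 < e -> exists N, forall m n, (N <= m)%N -> (N <= n)%N ->
        hnorm (u m - u n) < e) ->
    exists l : H, forall e : R, 0 < e -> exists N, forall n, (N <= n)%N ->
        hnorm (u n - l) < e.

Definition is_hilbert : Prop := inner_product_axioms /\ complete_ip.

Definition is_linear (f : H -> H) : Prop :=
  forall (a : R[i]) x y, f (a *: x + y) = a *: f x + f y.

Definition bounded_op (f : H -> H) : Prop :=
  is_linear f /\ exists M : R, forall x, hnorm (f x) <= M * hnorm x.

Definition is_adjoint (f g : H -> H) : Prop :=
  forall x y, ip (f x) y = ip x (g y).

Definition positive_op (f : H -> H) : Prop :=
  bounded_op f /\ forall x, 0 <= ip (f x) x.

Definition range (f : H -> H) : set H := [set y | exists x, f x = y].

Definition hclosure (E : set H) : set H :=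
  [set x | forall e : R, 0 < e -> exists y, E y /\ hnorm (x - y) < e].

Definition is_sqrt_op (A Ah : H -> H) : Prop :=
  positive_op Ah /\ forall x, Ah (Ah x) = A x.

Definition Anorm (A : H -> H) (x : H) : R := Num.sqrt (complex.Re (ip (A x) x)).

Definition Aopnorm (A S : H -> H) : R :=
  sup [set Anorm A (S x) | x in [set x | hclosure (range A) x /\ Anorm A x = 1]].

Definition Aspectral_radius (A S : H -> H) : R :=
  limn (fun n : nat => Aopnorm A (iter n S) `^ (n%:R^-1)).

(* S in B_{A^{1/2}}(H), given S^* = Sadj and A^{1/2} = Ah *)
Definition in_BAhalf (Ah S Sadj : H -> H) : Prop :=
  bounded_op S /\ range (Sadj \o Ah) `<=` range Ah.

Definition is_diamond (Ah Sadj Sd : H -> H) : Prop :=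
  [/\ bounded_op Sd,
      forall x, Sadj (Ah x) = Ah (Sd x)
    & range Sd `<=` hclosure (range Ah)].

End Hilbert.

(* Main.v *)
Require Import Defs.
From HB Require Import structures.
From mathcomp Require Import all_boot all_order all_algebra.
From mathcomp Require Import all_classical all_reals all_analysis.
From mathcomp Require Import complex.
From mathcomp Require Import ring lra.
Import Order.TTheory GRing.Theory Num.Theory.
Local Open Scope ring_scope.
Local Open Scope classical_set_scope.

Notation cRe := complex.Re.
Notation cIm := complex.Im.

Section CAlg.
Context {R : realType}.
Implicit Types a b : R[i].
Lemma ReD' a b : cRe (a + b) = cRe a + cRe b.
Proof. by case: a => ? ?; case: b => ? ?. Qed.
Lemma ImD' a b : cIm (a + b) = cIm a + cIm b.
Proof. by case: a => ? ?; case: b => ? ?. Qed.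
Lemma ReM' a b : cRe (a * b) = cRe a * cRe b - cIm a * cIm b.
Proof. by case: a => ? ?; case: b => ? ?. Qed.
Lemma ImM' a b : cIm (a * b) = cRe a * cIm b + cIm a * cRe b.
Proof. case: a => ? ?; case: b => ? ? /=. by rewrite addrC. Qed.
Lemma ReN' a : cRe (- a) = - cRe a.
Proof. by case: a => ? ?. Qed.
Lemma ImN' a : cIm (- a) = - cIm a.
Proof. by case: a => ? ?. Qed.
Lemma ReJ' a : cRe (a^*) = cRe a.
Proof. by case: a => ? ?. Qed.
Lemma ImJ' a : cIm (a^*) = - cIm a.
Proof. by case: a => ? ?. Qed.
Lemma ReC' (r : R) : cRe ((r%:C)%C : R[i]) = r. Proof. by []. Qed.
Lemma ImC' (r : R) : cIm ((r%:C)%C : R[i]) = 0. Proof. by []. Qed.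
Lemma Rei : cRe ('i%C : R[i]) = 0. Proof. by []. Qed.
Lemma Imi : cIm ('i%C : R[i]) = 1. Proof. by []. Qed.
Lemma ge0' a : 0 <= a -> cIm a = 0 /\ 0 <= cRe a.
Proof. rewrite lecE => /andP[/eqP -> ->]. by []. Qed.
Lemma eqc0 a : cRe a = 0 -> cIm a = 0 -> a = 0.
Proof. by case: a => ? ? /= -> ->. Qed.
Lemma eqcP a b : cRe a = cRe b -> cIm a = cIm b -> a = b.
Proof. by case: a => ? ?; case: b => ? ? /= -> ->. Qed.
Lemma conjM' a b : (a * b)^* = a^* * b^*.
Proof. apply: eqcP; rewrite ?(ReJ', ImJ', ReM', ImM', ReD', ImD'); lra. Qed.
Lemma conjD' a b : (a + b)^* = a^* + b^*.
Proof. apply: eqcP; rewrite ?(ReJ', ImJ', ReM', ImM', ReD', ImD'); lra. Qed.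
Lemma conjK' a : (a^*)^* = a.
Proof. apply: eqcP; rewrite ?(ReJ', ImJ', ReM', ImM', ReD', ImD'); lra. Qed.
End CAlg.
Section IP.
Context {R : realType} {H : lmodType R[i]} (ip : H -> H -> R[i]).
Hypothesis ipA : inner_product_axioms ip.

Definition rip (x y : H) : R := cRe (ip x y).

Lemma ipDZl a x y z : ip (a *: x + y) z = a * ip x z + ip y z.
Proof. by case: ipA => h _ _ _; apply: h. Qed.
Lemma ipJ x y : ip y x = (ip x y)^*.
Proof. by case: ipA => _ h _ _; apply: h. Qed.
Lemma ip_ge0 x : 0 <= ip x x.
Proof. by case: ipA => _ _ h _; apply: h. Qed.
Lemma ip_eq0 x : ip x x = 0 -> x = 0.
Proof. by case: ipA => _ _ _ h; apply: h. Qed.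

Lemma ip0l z : ip 0 z = 0.
Proof.
have := ipDZl 1 0 0 z; rewrite scale1r addr0 mul1r => h.
by apply: (@addrI _ (ip 0 z)); rewrite addr0 -h.
Qed.
Lemma ipDl x y z : ip (x + y) z = ip x z + ip y z.
Proof. by rewrite -[x]scale1r ipDZl mul1r scale1r. Qed.
Lemma ipZl a x z : ip (a *: x) z = a * ip x z.
Proof. by rewrite -[a *: x]addr0 ipDZl ip0l addr0. Qed.
Lemma ipNl x z : ip (- x) z = - ip x z.
Proof. by rewrite -scaleN1r ipZl mulN1r. Qed.
Lemma ipDr z x y : ip z (x + y) = ip z x + ip z y.
Proof. by rewrite ipJ ipDl conjD' -!ipJ. Qed.
Lemma ipZr z a x : ip z (a *: x) = a^* * ip z x.
Proof. by rewrite ipJ ipZl conjM' -!ipJ. Qed.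
Lemma ip0r z : ip z 0 = 0.
Proof. by rewrite ipJ ip0l; apply: eqcP; rewrite ?ReJ' ?ImJ' /= ?oppr0. Qed.

Lemma ripC x y : rip x y = rip y x.
Proof. by rewrite /rip ipJ ReJ'. Qed.
Lemma ripDl x y z : rip (x + y) z = rip x z + rip y z.
Proof. by rewrite /rip ipDl ReD'. Qed.
Lemma ripNl x z : rip (- x) z = - rip x z.
Proof. by rewrite /rip ipNl ReN'. Qed.
Lemma ripBl x y z : rip (x - y) z = rip x z - rip y z.
Proof. by rewrite ripDl ripNl. Qed.
Lemma ripZl (r : R) x z : rip ((r%:C)%C *: x) z = r * rip x z.
Proof. by rewrite /rip ipZl ReM' ReC' ImC' mul0r subr0. Qed.
Lemma ripDr x y z : rip z (x + y) = rip z x + rip z y.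
Proof. by rewrite ripC ripDl !(ripC _ z). Qed.
Lemma ripNr x z : rip z (- x) = - rip z x.
Proof. by rewrite ripC ripNl ripC. Qed.
Lemma ripBr x y z : rip z (x - y) = rip z x - rip z y.
Proof. by rewrite ripDr ripNr. Qed.
Lemma ripZr (r : R) x z : rip z ((r%:C)%C *: x) = r * rip z x.
Proof. by rewrite ripC ripZl ripC. Qed.
Lemma rip0l z : rip 0 z = 0.
Proof. by rewrite /rip ip0l. Qed.
Lemma rip0r z : rip z 0 = 0.
Proof. by rewrite ripC rip0l. Qed.
Lemma rip_ge0 x : 0 <= rip x x.
Proof. by have [] := ge0' _ (ip_ge0 x). Qed.
Lemma rip_eq0 x : rip x x = 0 -> x = 0.
Proof. move=> h; apply: ip_eq0; apply: eqc0 => //; by have [] := ge0' _ (ip_ge0 x). Qed.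

Lemma rip_ext u v : (forall z, rip z u = rip z v) -> u = v.
Proof.
move=> h; apply/eqP; rewrite -subr_eq0; apply/eqP; apply: rip_eq0.
by rewrite ripBr h subrr.
Qed.

Local Notation hn := (hnorm ip).
Lemma hnE x : hn x = Num.sqrt (rip x x). Proof. by []. Qed.
Lemma hn_ge0 x : 0 <= hn x. Proof. exact: sqrtr_ge0. Qed.
Lemma hn_sq x : hn x ^+ 2 = rip x x.
Proof. by rewrite hnE sqr_sqrtr // rip_ge0. Qed.
Lemma hn_eq0 x : hn x = 0 -> x = 0.
Proof.
move=> h; apply: rip_eq0; by rewrite -hn_sq h expr0n.
Qed.
Lemma hn0 : hn 0 = 0.
Proof. by rewrite hnE rip0l sqrtr0. Qed.
Lemma hnZ (r : R) x : 0 <= r -> hn ((r%:C)%C *: x) = r * hn x.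
Proof.
move=> r0; rewrite !hnE ripZl ripZr mulrA sqrtrM ?mulr_ge0 //.
by rewrite -expr2 sqrtr_sqr ger0_norm.
Qed.

Lemma CS y w : rip y w <= hn y * hn w.
Proof.
have [a0|a0] := eqVneq (hn y) 0.
  by rewrite (hn_eq0 _ a0) rip0l hn0 mul0r.
have [b0|b0] := eqVneq (hn w) 0.
  by rewrite (hn_eq0 _ b0) rip0r hn0 mulr0.
have ha := hn_sq y; have hb := hn_sq w.
have a1 : 0 < hn y by rewrite lt0r a0 hn_ge0.
have b1 : 0 < hn w by rewrite lt0r b0 hn_ge0.
have := rip_ge0 ((hn w)%:C%C *: y - (hn y)%:C%C *: w).
rewrite ripBl !ripBr !ripZl !ripZr (ripC w y) -ha -hb.
set a := hn y; set b := hn w; set c := rip y w => h.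
have ab : 0 < a * b by rewrite mulr_gt0.
nra.
Qed.

Lemma bound_abs (L : H -> H) (K : R) :
  (forall v, hn (L v) <= K * hn v) -> forall v, hn (L v) <= `|K| * hn v.
Proof.
move=> hK v; apply: (le_trans (hK v)); apply: ler_wpM2r; [exact: hn_ge0|exact: ler_norm].
Qed.

Lemma lin0 (L : H -> H) : is_linear L -> L 0 = 0.
Proof.
move=> hL; have := hL 1 0 0; rewrite scale1r addr0 scale1r => h.
by apply: (@addrI _ (L 0)); rewrite addr0 -h.
Qed.
Lemma linD (L : H -> H) : is_linear L -> forall x y, L (x + y) = L x + L y.
Proof. by move=> hL x y; rewrite -[x]scale1r hL !scale1r. Qed.
Lemma linZ (L : H -> H) : is_linear L -> forall a x, L (a *: x) = a *: L x.
Proof. by move=> hL a x; rewrite -[a *: x]addr0 hL lin0 // addr0. Qed.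
Lemma linN (L : H -> H) : is_linear L -> forall x, L (- x) = - L x.
Proof. by move=> hL x; rewrite -scaleN1r linZ // scaleN1r. Qed.
Lemma linB (L : H -> H) : is_linear L -> forall x y, L (x - y) = L x - L y.
Proof. by move=> hL x y; rewrite linD // linN. Qed.

Lemma pos_selfadj (B : H -> H) : is_linear B -> (forall x, 0 <= ip (B x) x) ->
  forall x y, rip (B x) y = rip x (B y).
Proof.
move=> hB hp x y.
have h1 := ge0' _ (hp (x + 'i%C *: y)).
have h2 := ge0' _ (hp x).
have h3 := ge0' _ (hp y).
move: h1 => [+ _]; rewrite linD // linZ // !ipDl !ipDr !ipZl !ipZr.
rewrite !ImD' !ImM' ?(ReM', ImM', ReJ', ImJ', Rei, Imi).
rewrite /rip (ipJ y (B x)) (ipJ (B y) x) !ReJ'.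
case: h2 => h2 _; case: h3 => h3 _. rewrite h2 h3. lra.
Qed.

End IP.
Section Ops.
Context {R : realType} {H : lmodType R[i]} (ip : H -> H -> R[i]).
Hypothesis ipA : inner_product_axioms ip.
Variables (A Ah : H -> H).
Hypothesis hAhlin : is_linear Ah.
Hypothesis hAhpos : forall x, 0 <= ip (Ah x) x.
Hypothesis hsq : forall x, Ah (Ah x) = A x.

Local Notation hn := (hnorm ip).
Local Notation rip := (rip ip).
Local Notation C := (hclosure ip (Defs.range A)).

Definition good (L : H -> H) :=
  [/\ is_linear L, exists K, forall v, hn (L v) <= K * hn v
    & forall x, L (Ah x) = Ah (L x)].

Lemma Ah_sa x y : rip (Ah x) y = rip x (Ah y).
Proof. exact: pos_selfadj. Qed.

Lemma Anorm_hn x : Anorm ip A x = hn (Ah x).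
Proof.
by rewrite /Anorm -hsq /hnorm -/(rip _ _) Ah_sa.
Qed.

Lemma good_A L : good L -> forall x, L (A x) = A (L x).
Proof. by case=> _ _ hc x; rewrite -!hsq !hc. Qed.

Lemma good_iter L : good L -> forall n, good (iter n L).
Proof.
case=> hl [K hK] hc; elim=> [|n [ihl [K' ihK] ihc]].
  by split; [move=> a x y | exists 1 => v; rewrite mul1r | ].
split.
- by move=> a x y /=; rewrite ihl hl.
- exists (`|K| * `|K'|) => v /=.
  apply: (le_trans (bound_abs ip _ _ hK _)).
  rewrite -mulrA; apply: ler_wpM2l => //.
  exact: (le_trans (bound_abs ip _ _ ihK _)).
- by move=> x /=; rewrite ihc hc.
Qed.

Lemma good_C L : good L -> forall x, C x -> C (L x).
Proof.
move=> gL x hx e e0; case: (gL) => hl [K hK] hc.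
have K'0 : 0 < `|K| + 1 by rewrite ltr_wpDl.
have [_ [[y0 <-] hy]] := hx (e / (`|K| + 1)) (divr_gt0 e0 K'0).
exists (L (A y0)); split; first by exists (L y0); rewrite (good_A _ gL).
rewrite -linB //.
apply: (le_lt_trans (bound_abs ip _ _ hK _)).
move: hy; rewrite ltr_pdivlMr // => hy.
apply: le_lt_trans hy.
by rewrite [X in _ <= X]mulrC mulrDl mul1r lerDl hn_ge0.
Qed.

Lemma scale_good (r : R) : 0 <= r -> good (fun v => (r%:C)%C *: v).
Proof.
move=> r0; split.
- by move=> a x y; rewrite scalerDr !scalerA mulrC.
- by exists r => v; rewrite (hnZ ip ipA).
- by move=> x; rewrite linZ.
Qed.


Definition Pset := [set x | hclosure ip (Defs.range A) x /\ Anorm ip A x = 1].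
Local Notation P := Pset.

Lemma dir S S' : good S -> good S' -> (forall a b, rip (S a) b = rip a (S' b)) ->
  forall x, P x -> hn (S (Ah x)) <= sup [set hn (S' (Ah x)) | x in P].
Proof.
move=> gS gS' hSS x [Cx Ax1].
have hy1 : hn (Ah x) = 1 by rewrite -Anorm_hn.
set E := [set hn (S' (Ah x)) | x in P].
have ubE : has_ubound E.
  case: gS' => _ [K hK] _; exists K => _ [z [_ Az] <-].
  by have := hK (Ah z); rewrite -Anorm_hn Az mulr1.
have s0 : 0 <= sup E.
  apply: le_trans (hn_ge0 ip (S' (Ah x))) _; apply: (ub_le_sup ubE).
  by exists x.
have claim : forall z, C z -> hn (S' (Ah z)) <= sup E * hn (Ah z).
  move=> z Cz; case: (gS') => l' _ _.
  have [h0|h0] := eqVneq (hn (Ah z)) 0.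
    by rewrite (hn_eq0 ip ipA _ h0) (lin0 _ l') (hn0 ip ipA) mulr0.
  have c0 : 0 < hn (Ah z) by rewrite lt0r h0 hn_ge0.
  set r := (hn (Ah z))^-1.
  have r0 : 0 <= r by rewrite invr_ge0 ltW.
  have hE : E (hn (S' (Ah ((r%:C)%C *: z)))).
    exists ((r%:C)%C *: z) => //; split.
      exact: (good_C _ (scale_good _ r0) _ Cz).
    by rewrite Anorm_hn (linZ _ hAhlin) (hnZ ip ipA) // /r mulVf.
  have := ub_le_sup ubE hE.
  rewrite (linZ _ hAhlin) (linZ _ l') (hnZ ip ipA) // /r mulrC.
  by rewrite ler_pdivrMr.
set u := S (Ah x).
have hu : u = Ah (S x) by rewrite /u; case: gS => _ _ ->.
have h2 : hn u ^+ 2 <= sup E * hn u.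
  rewrite (hn_sq ip ipA) /u hSS -/u.
  apply: le_trans (CS ip ipA _ _) _; rewrite hy1 mul1r hu.
  apply: claim; exact: (good_C _ gS).
rewrite expr2 in h2.
have := hn_ge0 ip u; rewrite le0r => /orP[/eqP -> //|hp].
by rewrite -(ler_pM2r hp).
Qed.

Variables (T Tadj : H -> H).
Hypothesis hTlin : is_linear T.
Hypothesis hTb : exists M, forall x, hn (T x) <= M * hn x.
Hypothesis hadj : forall x y, ip (T x) y = ip x (Tadj y).
Hypothesis hcomm : forall x, T (Ah x) = Ah (T x).

Lemma radj a b : rip (T a) b = rip a (Tadj b).
Proof. by rewrite /rip hadj. Qed.

Lemma Tadj_lin : is_linear Tadj.
Proof.
move=> a x y; apply: (rip_ext ip ipA) => z.
rewrite -radj /rip !(ipDr ip ipA) !(ipZr ip ipA) -!hadj.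
by [].
Qed.

Lemma Tadj_bound : forall y, hn (Tadj y) <= `|projT1 (cid hTb)| * hn y.
Proof.
case: (cid hTb) => M hM /=; have hM' := bound_abs ip _ _ hM.
move=> y.
have h2 : hn (Tadj y) ^+ 2 <= (`|M| * hn y) * hn (Tadj y).
  rewrite (hn_sq ip ipA) -radj.
  apply: le_trans (CS ip ipA _ _) _.
  rewrite mulrAC; apply: ler_wpM2r; first exact: hn_ge0.
  exact: hM'.
rewrite expr2 in h2.
have := hn_ge0 ip (Tadj y); rewrite le0r => /orP[/eqP -> |hp].
  by rewrite mulr_ge0 ?hn_ge0.
by rewrite -(ler_pM2r hp).
Qed.

Lemma Tadj_comm x : Tadj (Ah x) = Ah (Tadj x).
Proof.
apply: (rip_ext ip ipA) => z.
by rewrite -radj -Ah_sa -hcomm radj Ah_sa.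
Qed.

Lemma goodT : good T.
Proof. by split. Qed.
Lemma goodTadj : good Tadj.
Proof.
split; [exact: Tadj_lin | | exact: Tadj_comm].
by eexists; apply: Tadj_bound.
Qed.

Lemma iter_adj n a b : rip (iter n T a) b = rip a (iter n Tadj b).
Proof.
elim: n a b => // n ih a b.
by rewrite /= radj ih -iterSr.
Qed.

End Ops.

Lemma sup_eq_img {R : realType} {T : Type} (P : set T) (f g : T -> R) :
  (forall x, P x -> f x <= sup [set g x | x in P]) ->
  (forall x, P x -> g x <= sup [set f x | x in P]) ->
  sup [set f x | x in P] = sup [set g x | x in P].
Proof.
move=> hf hg; case: (pselect (exists x, P x)) => [[x Px]|nP].
  apply/le_anti/andP; split; apply: ge_sup.
  - by exists (f x); exists x.
  - by move=> _ [y Py <-]; apply: hf.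
  - by exists (g x); exists x.
  - by move=> _ [y Py <-]; apply: hg.
have -> : P = set0.
  by apply/seteqP; split => y // Py; apply: nP; exists y.
by rewrite !image_set0.
Qed.

Theorem mainTheorem8 (R : realType) (H : lmodType R[i]) (ip : H -> H -> R[i])
  (A Ah T Tadj Td : H -> H) :
  is_hilbert ip ->
  positive_op ip A -> (exists x, A x != 0) ->
  is_sqrt_op ip A Ah ->
  bounded_op ip T -> is_adjoint ip T Tadj ->
  in_BAhalf ip Ah T Tadj ->
  (forall x, T (Ah x) = Ah (T x)) ->
  is_diamond ip Ah Tadj Td ->
  Aspectral_radius ip A T = Aspectral_radius ip A Td.
Proof.
move=> [ipA _] _ _ [[[hAhlin _] hAhpos] hsq] [hTlin hTb] hadj _ hcomm [_ hd _].
suff E : (fun n : nat => Aopnorm ip A (iter n T) `^ (n%:R^-1)) =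
  (fun n : nat => Aopnorm ip A (iter n Td) `^ (n%:R^-1)).
  by rewrite /Aspectral_radius E.
apply: funext => n; congr (_ `^ _).
rewrite /Aopnorm.
have gT : good ip Ah (iter n T) by apply: good_iter; apply: goodT.
have gTa : good ip Ah (iter n Tadj).
  by apply: good_iter; apply: (goodTadj ip ipA Ah hAhlin hAhpos T).
have diter : forall x, Ah (iter n Td x) = iter n Tadj (Ah x).
  elim: n {gT gTa} => // n ih x; by rewrite /= -hd ih.
rewrite (eq_imagel (f' := fun x => hnorm ip (iter n T (Ah x)))); last first.
  move=> x _. have := (Anorm_hn ip ipA A Ah hAhlin hAhpos hsq (iter n T x)). move=> ->.
  by case: gT => _ _ ->.
rewrite (eq_imagel (f := fun x => Anorm ip A (iter n Td x)) (f' := fun x => hnorm ip (iter n Tadj (Ah x)))); last first.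
  move=> x _; have := (Anorm_hn ip ipA A Ah hAhlin hAhpos hsq (iter n Td x)).
  by move=> ->; rewrite diter.
apply: sup_eq_img => x Px.
- apply: (dir ip ipA A Ah hAhlin hAhpos hsq) => //.
  by move=> a b; apply: iter_adj.
- apply: (dir ip ipA A Ah hAhlin hAhpos hsq) => // a b.
  by rewrite (ripC ip ipA) -(iter_adj _ _ _ hadj) (ripC ip ipA).
Qed.
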